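(* In multihop Peg Duotaire, for every integer $n\ge 1$, the position $1^n$ (a block of $n$ consecutive pegs) has nim-value $0$ if $n\equiv 0$ or $1 \pmod 4$, and nim-value $1$ if $n\equiv 2$ or $3\pmod 4$.
   Context: Peg Duotaire is an impartial two-player game played on the infinite line of sites indexed by $\mathbb{Z}$, each site holding a peg or being a hole, with finitely many pegs. A word $w\in\{0,1\}^*$ denotes the position in which $w$ is written on consecutive sites ($1$ = peg, $0$ = hole) and all other sites are holes. A hop: for a peg at site $i$, a peg at site $i+d$ and a hole at site $i+2d$ ($d=\pm1$), move the peg from $i$ to $i+2d$ and remove the peg at $i+d$. In the multihop version, a move is a sequence of one or more hops all performed by the same peg. Players alternate moves; a player unable to move loses. The nim-value of a position is the least nonnegative integer not among the nim-values of positions reachable in one move. *)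

(* Defs.v *)
From HB Require Import structures.
From mathcomp Require Import all_boot all_order all_algebra.
From mathcomp Require Import finmap.
Set Implicit Arguments. Unset Strict Implicit. Unset Printing Implicit Defensive.
Import Order.TTheory GRing.Theory Num.Theory.
Local Open Scope ring_scope.

(* A position: the finite set of sites (in Z) holding a peg. *)
Notation position := {fset int}.

Definition hop (S : position) (i d : int) : bool :=
  ((d == 1) || (d == -1)) && ((i \in S) && ((i + d) \in S) && ((i + 2 * d) \notin S)).

Definition hop_result (S : position) (i d : int) : position :=
  let a := i + 2 * d in let b := i + d in (a |` (S `\` [fset i; b]))%fset.

Inductive chain : position -> int -> position -> int -> Prop :=
| chain_one S i d :
    hop S i d -> chain S i (hop_result S i d) (i + 2 * d)
| chain_step S i d S' j :
    hop S i d -> chain (hop_result S i d) (i + 2 * d) S' j -> chain S i S' j.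

Definition move (S S' : position) : Prop := exists i j, chain S i S' j.

(* nimval S g : the nim-value of S is g, i.e. g = mex of the nim-values
   of the options of S.  (Least fixed point; the game is terminating, so
   this relation is functional and total.) *)
Inductive nimval : position -> nat -> Prop :=
| nimval_mex S g :
    (forall S', move S S' -> exists2 h, nimval S' h & h <> g) ->
    (forall k, (k < g)%N -> exists2 S', move S S' & nimval S' k) ->
    nimval S g.

(* The word 1^n written on the sites 0, 1, ..., n-1. *)
Definition block (n : nat) : position := [fset (Posz k) | k in iota 0 n]%fset.

(* Main.v *)
Require Import Defs.
From mathcomp Require Import all_boot all_order all_algebra.
From mathcomp Require Import finmap.
From mathcomp Require Import zify.
Set Implicit Arguments. Unset Strict Implicit. Unset Printing Implicit Defensive.
Import Order.TTheory GRing.Theory Num.Theory.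
Local Open Scope ring_scope.

Definition P (n j k : nat) : position :=
  ([fset (2 * (t%:Z) - 1)%R | t in iota 0 j] `|`
   [fset (2 * (j%:Z) + s%:Z)%R | s in iota 0 (n - 2 * j - 2 * k)%N] `|`
   [fset (n%:Z - 2 * t%:Z)%R | t in iota 0 k])%fset.

Lemma memP n j k (x : int) :
  x \in P n j k <->
  ((exists t : nat, (t < j)%N /\ x = 2 * t%:Z - 1) \/
   (2 * j%:Z <= x /\ x + 2 * k%:Z < n%:Z) \/
   (exists t : nat, (t < k)%N /\ x = n%:Z - 2 * t%:Z)).
Proof.
rewrite /P !inE; split.
- case/orP => [/orP [] | ].
  + case/imfsetP => t /=; rewrite mem_iota => /andP [_ Ht] ->; left; exists t; split => //; lia.
  + case/imfsetP => s /=; rewrite mem_iota => /andP [_ Hs] ->; right; left; lia.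
  + case/imfsetP => t /=; rewrite mem_iota => /andP [_ Ht] ->; right; right; exists t; split => //; lia.
- case => [[t [Ht ->]] | [[H1 H2] | [t [Ht ->]]]].
  + apply/orP; left; apply/orP; left; apply/imfsetP; exists t => //=; rewrite mem_iota; lia.
  + apply/orP; left; apply/orP; right; apply/imfsetP; exists (absz (x - 2 * j%:Z)%R) => /=.
    * rewrite mem_iota; lia.
    * lia.
  + apply/orP; right; apply/imfsetP; exists t => //=; rewrite mem_iota; lia.
Qed.

Lemma hopP n j k i d : (2 * j + 2 * k <= n)%N -> hop (P n j k) i d ->
  (2 * j + 2 * k + 2 <= n)%N /\
  ((i = 2 * j%:Z + 1 /\ d = -1) \/ (i = n%:Z - 2 - 2 * k%:Z /\ d = 1)).
Proof.
move=> Hjk; rewrite /hop => /andP [Hd /andP [/andP [Hi Hid] Hn]].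
have Hd' : d = 1 \/ d = -1 by case/orP: Hd => /eqP; auto.
move/memP: Hi => Hi; move/memP: Hid => Hid.
have Hm : ~ (2 * j%:Z <= i + 2 * d /\ i + 2 * d + 2 * k%:Z < n%:Z).
  by move=> H; move/negP: Hn; apply; apply/memP; right; left.
clear Hd; case: Hd' => ->{d} in Hi Hid Hn Hm *;
case: Hi => [[t [Ht Ei]] | [[H1 H2] | [t [Ht Ei]]]];
case: Hid => [[t' [Ht' Ei']] | [[H1' H2'] | [t' [Ht' Ei']]]]; lia.
Qed.

Lemma hopL n j k : (2 * j + 2 * k + 2 <= n)%N ->
  hop (P n j k) (2 * j%:Z + 1) (-1) /\
  hop_result (P n j k) (2 * j%:Z + 1) (-1) = P n j.+1 k.
Proof.
move=> Hn; split.
- rewrite /hop eqxx orbT /=; apply/andP; split; [apply/andP; split|].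
  + apply/memP; right; left; lia.
  + apply/memP; right; left; lia.
  + apply/negP => /memP [[t [Ht Ei]] | [[H1 H2] | [t [Ht Ei]]]]; lia.
- apply/fsetP => x; rewrite /hop_result in_fset1U in_fsetD.
  apply/idP/idP.
  + case/orP => [/eqP -> | /andP [Hx Hs]].
    * apply/memP; left; exists j; split; lia.
    * move/memP: Hs => Hs; apply/memP.
      move: Hx; rewrite in_fset2 negb_or => /andP [/eqP Hx1 /eqP Hx2].
      case: Hs => [[t [Ht Ei]] | [[H1 H2] | [t [Ht Ei]]]].
      -- left; exists t; split; lia.
      -- right; left; lia.
      -- right; right; exists t; split; lia.
  + move/memP => Hs.
    apply/orP; case: eqP => Hne; [by left | right].
    rewrite in_fset2 negb_or; apply/andP; split.
    * apply/andP; split; apply/eqP => E; subst x;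
      case: Hs => [[t [Ht Ei]] | [[H1 H2] | [t [Ht Ei]]]]; lia.
    * apply/memP.
      case: Hs => [[t [Ht Ei]] | [[H1 H2] | [t [Ht Ei]]]].
      -- left; exists t; split; lia.
      -- right; left; lia.
      -- right; right; exists t; split; lia.
Qed.

Lemma hopR n j k : (2 * j + 2 * k + 2 <= n)%N ->
  hop (P n j k) (n%:Z - 2 - 2 * k%:Z) 1 /\
  hop_result (P n j k) (n%:Z - 2 - 2 * k%:Z) 1 = P n j k.+1.
Proof.
move=> Hn; split.
- rewrite /hop eqxx /=; apply/andP; split; [apply/andP; split|].
  + apply/memP; right; left; lia.
  + apply/memP; right; left; lia.
  + apply/negP => /memP [[t [Ht Ei]] | [[H1 H2] | [t [Ht Ei]]]]; lia.
- apply/fsetP => x; rewrite /hop_result in_fset1U in_fsetD.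
  apply/idP/idP.
  + case/orP => [/eqP -> | /andP [Hx Hs]].
    * apply/memP; right; right; exists k; split; lia.
    * move/memP: Hs => Hs; apply/memP.
      move: Hx; rewrite in_fset2 negb_or => /andP [/eqP Hx1 /eqP Hx2].
      case: Hs => [[t [Ht Ei]] | [[H1 H2] | [t [Ht Ei]]]].
      -- left; exists t; split; lia.
      -- right; left; lia.
      -- right; right; exists t; split; lia.
  + move/memP => Hs.
    apply/orP; case: eqP => Hne; [by left | right].
    rewrite in_fset2 negb_or; apply/andP; split.
    * apply/andP; split; apply/eqP => E; subst x;
      case: Hs => [[t [Ht Ei]] | [[H1 H2] | [t [Ht Ei]]]]; lia.
    * apply/memP.
      case: Hs => [[t [Ht Ei]] | [[H1 H2] | [t [Ht Ei]]]].
      -- left; exists t; split; lia.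
      -- right; left; lia.
      -- right; right; exists t; split; lia.
Qed.

Lemma chain_hop S i S' l : chain S i S' l -> exists d, hop S i d.
Proof. by case => [? ? d H | ? ? d ? ? H _]; exists d. Qed.

Lemma moveP n j k S' : (2 * j + 2 * k <= n)%N -> move (P n j k) S' ->
  (2 * j + 2 * k + 2 <= n)%N /\ (S' = P n j.+1 k \/ S' = P n j k.+1).
Proof.
move=> Hjk [i [l Hc]].
have Hfirst : forall i d, hop (P n j k) i d ->
   (2 * j + 2 * k + 2 <= n)%N /\ hop_result (P n j k) i d = P n j.+1 k /\ i + 2 * d = 2 * j%:Z - 1
   \/ (2 * j + 2 * k + 2 <= n)%N /\ hop_result (P n j k) i d = P n j k.+1 /\ i + 2 * d = n%:Z - 2 * k%:Z.
  move=> i0 d Hh; have [Hn [[-> ->] | [-> ->]]] := hopP Hjk Hh.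
  - left; split=> //; split; first by case: (hopL Hn).
    lia.
  - right; split=> //; split; first by case: (hopR Hn).
    lia.
move: Hc; set S := P n j k => Hc.
have : S = P n j k by [].
case: Hc => {}S {}i d.
- move=> Hh ES; subst S; case: (Hfirst _ d Hh) => [[Hn [-> _]] | [Hn [-> _]]]; auto.
- move=> S'' l' Hh Hc ES; subst S; exfalso.
  have [d' Hh'] := chain_hop Hc.
  case: (Hfirst _ d Hh) => [[Hn [E1 E2]] | [Hn [E1 E2]]]; rewrite E1 E2 in Hh'.
  + have Hjk' : (2 * j.+1 + 2 * k <= n)%N by lia.
    have := hopP Hjk' Hh'; lia.
  + have Hjk' : (2 * j + 2 * k.+1 <= n)%N by lia.
    have := hopP Hjk' Hh'; lia.
Qed.

Lemma gen n m : forall j k, (2 * j + 2 * k + m = n)%N -> nimval (P n j k) (odd m./2).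
Proof.
elim/ltn_ind: m => m IH j k Hm.
have Hjk : (2 * j + 2 * k <= n)%N by lia.
case: (leqP 2 m) => Hm2; last first.
  have -> : m./2 = 0%N by case: m Hm Hm2 IH => [|[|]].
  apply: nimval_mex => [S' Hmv | //].
  by have [Hn _] := moveP Hjk Hmv; exfalso; lia.
have Hhalf : odd (m - 2)./2 = ~~ odd m./2.
  by case: m Hm Hm2 IH => [|[|m]] //= *; rewrite subn2 /= negbK.
have IHL : nimval (P n j.+1 k) (odd (m - 2)./2).
  by apply: IH; lia.
have IHR : nimval (P n j k.+1) (odd (m - 2)./2).
  by apply: IH; lia.
rewrite Hhalf in IHL IHR.
apply: nimval_mex.
- move=> S' Hmv; have [_ [->|->]] := moveP Hjk Hmv;
  exists (~~ odd m./2) => //; by case: (odd m./2).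
- move=> g Hg; exists (P n j.+1 k).
  + exists (2 * j%:Z + 1), (2 * j%:Z + 1 + 2 * -1).
    have Hn : (2 * j + 2 * k + 2 <= n)%N by lia.
    have [Hh <-] := hopL Hn; exact: chain_one.
  + by move: Hg IHL; case: (odd m./2) => //=; case: g.
Qed.

Lemma blockP n : block n = P n 0 0.
Proof.
apply/fsetP => x; apply/idP/idP.
- case/imfsetP => t /=; rewrite mem_iota => /andP [_ Ht] ->.
  apply/memP; right; left; lia.
- move/memP => [[t [Ht _]] | [[H1 H2] | [t [Ht _]]]] //.
  apply/imfsetP; exists (absz x) => /=; first by rewrite mem_iota; lia.
  lia.
Qed.

Lemma parity n : (if (n %% 4 == 0)%N || (n %% 4 == 1)%N then 0%N else 1%N) = odd n./2.
Proof.
elim/ltn_ind: n => n IH; case: n IH => [|[|[|[|n]]]] IH //.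
have E : (n.+4 %% 4 = n %% 4)%N by rewrite -addn4 modnDr.
rewrite E (IH n) //=.
- by case: (odd (half n)).
- lia.

Qed.

Theorem mainTheorem7 (n : nat) :
  (1 <= n)%N ->
  nimval (block n) (if (n %% 4 == 0)%N || (n %% 4 == 1)%N then 0%N else 1%N).
Proof.
move=> _; rewrite blockP parity.
apply: gen; lia.
Qed.
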